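(* Let $n$ be an even positive integer, $m\ge 2$ an integer, and $f$ an integer with $1\le f\le m/2$ and $\gcd(f,m)=1$. Let $G$ be the dense Random Integer Generation game with $n$ players, $m$ strategies and parameter $f$ (defined in the context). Let $\bar{\sigma}$ be the mixed strategy profile in which every player plays the uniform distribution $(1/m,\dots,1/m)$ on $\{0,1,\dots,m-1\}$. Then $\bar{\sigma}$ is an alliance-resistant Nash equilibrium of $G$, and it is the only Nash equilibrium of $G$.
   Context: A one-shot game with $n$ players consists of finite pure-strategy sets $S_1,\dots,S_n$ and utility functions $u_i : S_1\times\cdots\times S_n \to \mathbb{R}$; players choose simultaneously and independently. A mixed strategy for player $i$ is a probability distribution $\sigma_i$ on $S_i$; a mixed strategy profile is $\sigma=(\sigma_1,\dots,\sigma_n)$, and $u_i(\sigma)$ denotes the expected utility when each $s_i$ is drawn independently from $\sigma_i$. A profile $\sigma$ is a Nash equilibrium if for every player $i$ and every mixed strategy $\tilde\sigma_i$ of player $i$, $u_i(\sigma) \ge u_i(\tilde\sigma_i, \sigma_{-i})$. A profile $\sigma$ is an alliance-resistant Nash equilibrium if for every non-empty set $P$ of players and every choice of mixed strategies $\tilde\sigma_P$ for the members of $P$, $u_P(\sigma) \ge u_P(\tilde\sigma_P, \sigma_{-P})$, where $u_P$ is the sum of the utilities of the members of $P$. Define $g:\mathbb{Z}\to\{-1,0,1\}$ by: writing $l$ modulo $m$ as a representative in $\{0,\dots,m-1\}$, $g(l)=1$ if $0\le l\le f-1$, $g(l)=-1$ if $m-f\le l\le m-1$, and $g(l)=0$ otherwise.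 Let $B=B^{(m,f)}$ be the $m\times m$ matrix with rows and columns indexed by $\{0,\dots,m-1\}$ and entries $B_{a,b}=g(b-a)$. The dense RIG game: each player $i\in\{1,\dots,n\}$ has pure strategy set $\{0,1,\dots,m-1\}$; players are paired as $(2k-1,2k)$ for $k=1,\dots,n/2$; at outcome $s=(s_1,\dots,s_n)$ player $2k-1$ receives $B_{s_{2k-1},s_{2k}}$ and player $2k$ receives $-B_{s_{2k-1},s_{2k}}$. *)

(* Defs.v *)
From mathcomp Require Import all_boot all_order all_algebra.
Set Implicit Arguments. Unset Strict Implicit. Unset Printing Implicit Defensive.
Import Order.TTheory GRing.Theory Num.Theory.
Local Open Scope ring_scope.

Section RIG.
Variable R : realFieldType.

(* g(l) for l given by its representative r in {0..m-1} *)
Definition gRIG (m f r : nat) : R :=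
  if (r < f)%N then 1 else if (m - f <= r)%N then -1 else 0.

(* B_{a,b} = g(b - a), with (b - a) mod m represented by (b + m - a) %% m *)
Definition Bmat (m f : nat) (a b : 'I_m) : R := gRIG m f ((b + m - a) %% m)%N.

(* Players are 0-indexed: pairs (2k, 2k+1) correspond to the paper's (2k+1, 2k+2).
   partner i = i+1 if i even, i-1 if i odd (n even makes this in range). *)
Definition partner (n : nat) (i : 'I_n) : 'I_n :=
  insubd i (if odd i then i.-1 else i.+1)%N.

Definition payoff (n m f : nat) (i : 'I_n) (s : {ffun 'I_n -> 'I_m}) : R :=
  if odd i then - Bmat f (s (partner i)) (s i)
  else Bmat f (s i) (s (partner i)).

Definition mixed (m : nat) (x : 'I_m -> R) : Prop :=
  (forall a, 0 <= x a) /\ \sum_(a < m) x a = 1.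

Definition is_profile (n m : nat) (sigma : 'I_n -> 'I_m -> R) : Prop :=
  forall i, mixed (sigma i).

Definition EU (n m f : nat) (sigma : 'I_n -> 'I_m -> R) (i : 'I_n) : R :=
  \sum_(s : {ffun 'I_n -> 'I_m}) (\prod_(j < n) sigma j (s j)) * payoff f i s.

Definition deviate (n m : nat) (sigma tau : 'I_n -> 'I_m -> R) (P : {set 'I_n})
  : 'I_n -> 'I_m -> R := fun j => if j \in P then tau j else sigma j.

Definition is_Nash (n m f : nat) (sigma : 'I_n -> 'I_m -> R) : Prop :=
  is_profile sigma /\
  forall (i : 'I_n) (t : 'I_m -> R), mixed t ->
    EU f (deviate sigma (fun _ => t) [set i]) i <= EU f sigma i.

Definition is_alliance_resistant_Nash (n m f : nat) (sigma : 'I_n -> 'I_m -> R)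
  : Prop :=
  is_profile sigma /\
  forall (P : {set 'I_n}) (tau : 'I_n -> 'I_m -> R),
    P != set0 -> is_profile tau ->
    \sum_(i in P) EU f (deviate sigma tau P) i <= \sum_(i in P) EU f sigma i.

Definition uniform_profile (n m : nat) : 'I_n -> 'I_m -> R :=
  fun _ _ => (m%:R)^-1.

End RIG.

(* Main.v *)
Require Import Defs.
From mathcomp Require Import all_boot all_order all_algebra.
From mathcomp Require Import zify ring lra.
Set Implicit Arguments. Unset Strict Implicit. Unset Printing Implicit Defensive.
Import Order.TTheory GRing.Theory Num.Theory.
Local Open Scope ring_scope.

Section Kernel.
Variable R : realFieldType.
Variables (m f : nat).
Hypothesis m0 : (0 < m)%N.
Hypothesis hf1 : (1 <= f)%N.
Hypothesis hf2 : (f * 2 <= m)%N.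
Hypothesis hcop : coprime f m.

Definition Xf (x : 'I_m -> R) (k : nat) : R := x (Ordinal (ltn_pmod k m0)).

Lemma Xmod x k k' : (k %% m = k' %% m)%N -> Xf x k = Xf x k'.
Proof. by move=> h; rewrite /Xf; congr x; apply: val_inj. Qed.

Lemma xX x (a : 'I_m) : x a = Xf x a.
Proof. by rewrite /Xf; congr x; apply: val_inj => /=; rewrite modn_small. Qed.

Lemma per_const (H : nat -> R) : (forall k k', (k %% m = k' %% m)%N -> H k = H k') ->
  (forall k, H (k + f)%N = H k) -> forall k, H k = H 0%N.
Proof.
move=> Hm Hf k.
have Hj : forall j, H (j * f)%N = H 0%N.
  by elim=> [|j IH]; [rewrite mul0n | rewrite mulSn addnC Hf].
have f0 : (0 < f)%N by [].
case: (egcdnP m f0) => km kn Hk _.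
rewrite (eqP hcop) in Hk.
rewrite -(Hj (km * k)%N); apply: Hm.
by rewrite mulnAC Hk mulnDl mul1n mulnAC modnMDl.
Qed.

Definition Sf x c := \sum_(l < f) Xf x (c + l).

Lemma Smod x c c' : (c %% m = c' %% m)%N -> Sf x c = Sf x c'.
Proof. by move=> h; apply: eq_bigr => l _; apply: Xmod; rewrite -modnDml h modnDml. Qed.

Lemma kernel_core x : (forall c, Sf x (c + (m - f)) = Sf x c) -> forall k, Xf x k = Xf x 0.
Proof.
move=> H.
have Sper : forall c, Sf x (c + f) = Sf x c.
  move=> c; rewrite -H -addnA subnKC; last by lia.
  by apply: Smod; rewrite modnDr.
have Sc : forall c, Sf x c = Sf x 0 := per_const (@Smod x) Sper.
apply: per_const; first exact: Xmod.
move=> c; have E : Sf x c.+1 = Sf x c by rewrite !Sc.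
have [f' ef] : exists f', f = f'.+1 by exists f.-1; rewrite prednK.
move: E; rewrite /Sf; move: (Xf x) => X.
rewrite ef big_ord_recr big_ord_recl /= addn0.
have -> : \sum_(i < f') X (c.+1 + i)%N = \sum_(i < f') X (c + lift ord0 i)%N.
  by apply: eq_bigr => i _; rewrite /= /bump /= addSnnS.
move=> E.
have Es : \sum_(i < f') X (c + lift ord0 i)%N = \sum_(i < f') X (c + bump 0 i)%N by [].
rewrite Es addrC in E; move/addIr: E.
by rewrite addSnnS.
Qed.


Lemma hfm : (f <= m)%N. Proof. lia. Qed.

Lemma sum_cut (F : nat -> R) :
  \sum_(l < m) ((l < f)%N : nat)%:R * F l = \sum_(l < f) F l.
Proof.
rewrite (big_ord_widen m F hfm) [RHS]big_mkcond /=; apply: eq_bigr => l _.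
by case: ifP; rewrite ?mul1r ?mul0r.
Qed.

Lemma sum_rev k (F : nat -> R) : \sum_(l < k) F l = \sum_(l < k) F (k - l.+1)%N.
Proof. by rewrite (reindex_inj rev_ord_inj). Qed.

Lemma gRIG_dec l : gRIG R m f l = ((l < f)%N : nat)%:R - ((m - f <= l)%N : nat)%:R.
Proof.
rewrite /gRIG; case: (ltnP l f) => h1; case: (leqP (m - f) l) => h2 /=;
  rewrite ?subr0 ?sub0r ?subrr //; lia.
Qed.

Lemma invB b l : (b < m)%N -> (l < m)%N -> ((b + m - (b + m - l) %% m) %% m)%N = l.
Proof.
move=> hb hl; case: (leqP l b) => h.
  have -> : (b + m - l = (b - l) + m)%N by lia.
  rewrite modnDr (modn_small (_ : b - l < m)%N); last by lia.
  have -> : (b + m - (b - l) = l + m)%N by lia.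
  by rewrite modnDr modn_small.
rewrite (modn_small (_ : b + m - l < m)%N); last by lia.
have -> : (b + m - (b + m - l) = l)%N by lia.
by rewrite modn_small.
Qed.

Lemma invC b l : (b < m)%N -> (l < m)%N -> (((l + b) %% m + m - b) %% m)%N = l.
Proof.
move=> hb hl; case: (ltnP (l + b) m) => h.
  rewrite (modn_small h).
  have -> : (l + b + m - b = l + m)%N by lia.
  by rewrite modnDr modn_small.
have -> : (l + b = (l + b - m) + m)%N by lia.
rewrite modnDr (modn_small (_ : l + b - m < m)%N); last by lia.
have -> : (l + b - m + m - b = l)%N by lia.
by rewrite modn_small.
Qed.

Lemma F1 x (b : 'I_m) :
  \sum_a x a * Bmat R f a b = Sf x (b + 1 + (m - f)) - Sf x (b + 1).
Proof.
pose h (l : 'I_m) : 'I_m := Ordinal (ltn_pmod (b + m - l) m0).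
have hinj : injective h.
  move=> l1 l2 /(congr1 val) /= e.
  by apply: ord_inj; rewrite -(invB (ltn_ord b) (ltn_ord l1)) e invB.
rewrite (reindex_inj hinj).
have -> : \sum_l x (h l) * Bmat R f (h l) b =
   \sum_(l < m) ((l < f)%N : nat)%:R * Xf x (b + m - l) -
   \sum_(l < m) ((m - f <= l)%N : nat)%:R * Xf x (b + m - l).
  rewrite -sumrB; apply: eq_bigr => l _.
  rewrite /Bmat /= invB // gRIG_dec mulrBr !(mulrC (x _)) //.

rewrite (sum_cut (fun l => Xf x (b + m - l))) (sum_rev f (fun l => Xf x (b + m - l))).
rewrite (sum_rev m (fun l => ((m - f <= l)%N : nat)%:R * Xf x (b + m - l))); congr (_ - _).
  by apply: eq_bigr => l _; apply: Xmod; congr (_ %% _)%N; have := ltn_ord l; lia.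
rewrite /Sf -(sum_cut (fun l => Xf x (b + 1 + l))); apply: eq_bigr => l _.
have -> : (m - f <= m - l.+1)%N = (l < f)%N.
  by apply/idP/idP; have := ltn_ord l; lia.
by congr (_ * _); apply: Xmod; congr (_ %% _)%N; have := ltn_ord l; lia.
Qed.

Lemma F2 x (b : 'I_m) :
  \sum_a x a * Bmat R f b a = Sf x b - Sf x (b + (m - f)).
Proof.
pose h (l : 'I_m) : 'I_m := Ordinal (ltn_pmod (l + b) m0).
have hinj : injective h.
  move=> l1 l2 /(congr1 val) /= e.
  by apply: ord_inj; rewrite -(invC (ltn_ord b) (ltn_ord l1)) e invC.
rewrite (reindex_inj hinj).
have -> : \sum_l x (h l) * Bmat R f b (h l) =
   \sum_(l < m) ((l < f)%N : nat)%:R * Xf x (l + b) -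
   \sum_(l < m) ((m - f <= l)%N : nat)%:R * Xf x (l + b).
  rewrite -sumrB; apply: eq_bigr => l _.
  rewrite /Bmat /= invC // gRIG_dec mulrBr !(mulrC (x _)) //.
rewrite (sum_cut (fun l => Xf x (l + b))).
rewrite (sum_rev m (fun l => ((m - f <= l)%N : nat)%:R * Xf x (l + b))); congr (_ - _).
  by apply: eq_bigr => l _; rewrite addnC.
have -> : \sum_(i < m) ((m - f <= m - i.+1)%N : nat)%:R * Xf x (m - i.+1 + b) =
          \sum_(i < m) ((i < f)%N : nat)%:R * Xf x (m - i.+1 + b).
  apply: eq_bigr => l _.
  have -> : (m - f <= m - l.+1)%N = (l < f)%N.
    by apply/idP/idP; have := ltn_ord l; lia.
  by [].
rewrite (sum_cut (fun l => Xf x (m - l.+1 + b))) (sum_rev f (fun l => Xf x (m - l.+1 + b))); apply: eq_bigr => l _.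
by apply: Xmod; congr (_ %% _)%N; have := ltn_ord l; lia.
Qed.

Lemma kerB x : (forall b : 'I_m, \sum_a x a * Bmat R f a b = 0) ->
  forall a : 'I_m, x a = Xf x 0.
Proof.
move=> H a; rewrite xX; apply: kernel_core => c.
pose b : 'I_m := Ordinal (ltn_pmod (c + (m - 1)) m0).
have := H b; rewrite F1 => /eqP; rewrite subr_eq0 => /eqP E.
rewrite (@Smod x _ (b + 1 + (m - f))); last first.
  rewrite /= -addnA modnDml.
  have -> : (c + (m - 1) + (1 + (m - f)) = c + (m - f) + m)%N by lia.
  by rewrite modnDr.
rewrite E; apply: Smod; rewrite /= modnDml.
have -> : (c + (m - 1) + 1 = c + m)%N by lia.
by rewrite modnDr.
Qed.

Lemma kerBT x : (forall b : 'I_m, \sum_a x a * Bmat R f b a = 0) ->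
  forall a : 'I_m, x a = Xf x 0.
Proof.
move=> H a; rewrite xX; apply: kernel_core => c.
pose b : 'I_m := Ordinal (ltn_pmod c m0).
have := H b; rewrite F2 => /eqP; rewrite subr_eq0 => /eqP E.
rewrite (@Smod x _ (b + (m - f))); last by rewrite /= modnDml.
by rewrite -E; apply: Smod; rewrite /= modn_mod.
Qed.

Lemma const_unif x : \sum_(a < m) x a = 1 -> (forall a : 'I_m, x a = Xf x 0) ->
  forall a : 'I_m, x a = (m%:R)^-1.
Proof.
move=> S1 H a; rewrite H.
have E : \sum_(a < m) x a = Xf x 0 * m%:R.
  by rewrite (eq_bigr (fun _ => Xf x 0)) // sumr_const card_ord mulr_natr.
have nz : (m%:R : R) != 0 by rewrite pnatr_eq0 -lt0n.
apply: (mulIf nz); rewrite -E S1 mulVf //.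
Qed.

Lemma rowsum (b : 'I_m) : \sum_a Bmat R f a b = 0.
Proof.
transitivity (\sum_a (fun _ => 1) a * Bmat R f a b).
  by apply: eq_bigr => a _; rewrite mul1r.
by rewrite F1 /Sf /Xf subrr.
Qed.

Lemma colsum (b : 'I_m) : \sum_a Bmat R f b a = 0.
Proof.
transitivity (\sum_a (fun _ => 1) a * Bmat R f b a).
  by apply: eq_bigr => a _; rewrite mul1r.
by rewrite F2 /Sf /Xf subrr.
Qed.

Variable n : nat.
Hypothesis hne : ~~ odd n.

Lemma partner_val (i : 'I_n) :
  val (partner i) = (if odd i then i.-1 else i.+1)%N.
Proof.
rewrite val_insubd; case: ifP => //; case: (boolP (odd i)) => hi /negbT hh.
  by have := ltn_ord i; lia.
have e : n = i.+1 by have := ltn_ord i; lia.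
by move: hne; rewrite (congr1 odd e) /= hi.
Qed.

Lemma partner_odd (i : 'I_n) : odd (partner i) = ~~ odd i.
Proof.
rewrite partner_val; case: (boolP (odd i)) => hi //=.
have pos : (0 < i)%N by case: (nat_of_ord i) hi.
by move: hi; rewrite -{1}(prednK pos) /= => /negbTE.
Qed.

Lemma partner_invol (i : 'I_n) : partner (partner i) = i.
Proof.
apply: ord_inj; rewrite partner_val partner_odd partner_val.
case: (boolP (odd i)) => hi //=.
have pos : (0 < i)%N by case: (nat_of_ord i) hi.
by rewrite prednK.
Qed.

Lemma partner_neq (i : 'I_n) : partner i != i.
Proof.
apply/eqP => /(congr1 (@nat_of_ord n)); rewrite partner_val.
case: (boolP (odd i)) => hi.
  have pos : (0 < i)%N by case: (nat_of_ord i) hi.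
  lia.
lia.
Qed.

Lemma partner_inj : injective (@partner n).
Proof. exact: can_inj partner_invol. Qed.

Definition pay (i : 'I_n) (a b : 'I_m) : R :=
  if odd i then - Bmat R f b a else Bmat R f a b.

Definition V i (x y : 'I_m -> R) := \sum_a \sum_b x a * y b * pay i a b.

Lemma sum_ind (y : 'I_m -> R) a0 : \sum_a y a * (a == a0)%:R = y a0.
Proof.
rewrite (bigD1 a0) //= eqxx mulr1 big1 ?addr0 // => c /negbTE ->.
by rewrite mulr0.
Qed.

Lemma sum_ind2 (G : 'I_m -> 'I_m -> R) a0 b0 :
  \sum_a \sum_b ((a0 == a)%:R * (b0 == b)%:R) * G a b = G a0 b0.
Proof.
rewrite (bigD1 a0) //= [X in _ + X]big1 ?addr0.
  rewrite (bigD1 b0) //= [X in _ + X]big1 ?addr0; first by rewrite !eqxx mulr1 mul1r.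
  by move=> b /negbTE; rewrite eq_sym => ->; rewrite mulr0 mul0r.
by move=> a /negbTE; rewrite eq_sym => hh; apply: big1 => b _; rewrite hh !mul0r.
Qed.

Lemma marg (rho : 'I_n -> 'I_m -> R) (hr : forall j, \sum_a rho j a = 1)
  (i q : 'I_n) (hiq : i != q) (F : 'I_m -> 'I_m -> R) :
  \sum_(s : {ffun 'I_n -> 'I_m}) (\prod_j rho j (s j)) * F (s i) (s q)
  = \sum_a \sum_b rho i a * rho q b * F a b.
Proof.
pose w (a b : 'I_m) (j : 'I_n) (c : 'I_m) : R := if j == i then (c == a)%:R else if j == q then (c == b)%:R else 1.
have key : forall a b, \prod_j \sum_c rho j c * w a b j c = rho i a * rho q b.
  move=> a b; rewrite (bigD1 i) //= (bigD1 q) /=; last by rewrite eq_sym.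
  rewrite [X in _ * (_ * X)]big1 ?mulr1; last first.
    move=> j /andP [hji hjq]; rewrite /w (negbTE hji) (negbTE hjq).
    by under eq_bigr do rewrite mulr1; exact: hr.
  rewrite /w eqxx (eq_sym q i) (negbTE hiq) eqxx.
  by rewrite !sum_ind.
have Pw : forall a b (s : {ffun 'I_n -> 'I_m}), \prod_j (rho j (s j) * w a b j (s j)) =
   (\prod_j rho j (s j)) * ((s i == a)%:R * (s q == b)%:R).
  move=> a b s; rewrite big_split /=; congr (_ * _).
  rewrite (bigD1 i) //= (bigD1 q) /=; last by rewrite eq_sym.
  rewrite [X in _ * (_ * X)]big1 ?mulr1; last first.
    by move=> j /andP [hji hjq]; rewrite /w (negbTE hji) (negbTE hjq).
  by rewrite /w eqxx (eq_sym q i) (negbTE hiq) eqxx.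
have Sab : forall a b, \sum_(s : {ffun 'I_n -> 'I_m})
    (\prod_j rho j (s j)) * ((s i == a)%:R * (s q == b)%:R) = rho i a * rho q b.
  move=> a b; rewrite -(eq_bigr _ (fun s _ => Pw a b s)).
  by rewrite -(bigA_distr_bigA (fun j c => rho j c * w a b j c)) key.
transitivity (\sum_(s : {ffun 'I_n -> 'I_m}) \sum_a \sum_b
   ((\prod_j rho j (s j)) * ((s i == a)%:R * (s q == b)%:R)) * F a b).
  apply: eq_bigr => s _.
  rewrite -(sum_ind2 (fun a b => (\prod_j rho j (s j)) * F a b) (s i) (s q)).
  by apply: eq_bigr => a _; apply: eq_bigr => b _; ring.
rewrite exchange_big; apply: eq_bigr => a _; rewrite exchange_big.
by apply: eq_bigr => b _; rewrite -mulr_suml Sab.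
Qed.

Definition profsum (rho : 'I_n -> 'I_m -> R) := forall j, \sum_a rho j a = 1.

Lemma EU_marg rho (hr : profsum rho) i :
  EU f rho i = V i (rho i) (rho (partner i)).
Proof.
rewrite /EU (eq_bigr (fun s : {ffun 'I_n -> 'I_m} => (\prod_j rho j (s j)) * pay i (s i) (s (partner i)))).
  by apply: marg => //; rewrite eq_sym partner_neq.
by move=> s _; rewrite /payoff /pay.
Qed.

Lemma pay_rowsum i a : \sum_b pay i a b = 0.
Proof. by rewrite /pay; case: (odd i); rewrite ?sumrN ?rowsum ?colsum ?oppr0. Qed.

Lemma pay_colsum i b : \sum_a pay i a b = 0.
Proof. by rewrite /pay; case: (odd i); rewrite ?sumrN ?rowsum ?colsum ?oppr0. Qed.

Lemma V_const_l i c y : V i (fun _ => c) y = 0.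
Proof.
rewrite /V exchange_big big1 // => b _.
by rewrite -mulr_sumr pay_colsum mulr0.
Qed.

Lemma V_const_r i x c : V i x (fun _ => c) = 0.
Proof.
rewrite /V big1 // => a _.
by rewrite -mulr_sumr pay_rowsum mulr0.
Qed.

Lemma V_point i x b : V i x (fun c => (c == b)%:R) = \sum_a x a * pay i a b.
Proof.
apply: eq_bigr => a _; rewrite (bigD1 b) //= eqxx mulr1 big1 ?addr0 //.
by move=> c /negbTE ->; rewrite mulr0 mul0r.
Qed.

Lemma V_partner i x y : V (partner i) x y = - V i y x.
Proof.
rewrite /V exchange_big -sumrN; apply: eq_bigr => b _.
rewrite -sumrN; apply: eq_bigr => a _.
rewrite /pay partner_odd; case: (odd i) => /=; ring.
Qed.

Lemma EU_partner rho (hr : profsum rho) i : EU f rho (partner i) = - EU f rho i.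
Proof. by rewrite !EU_marg // partner_invol V_partner. Qed.

Lemma unif_sum : \sum_(a < m) (m%:R : R)^-1 = 1.
Proof.
rewrite sumr_const card_ord -[LHS]mulr_natr mulVf //.
by rewrite pnatr_eq0 -lt0n.
Qed.

Lemma unif_profile : is_profile (@uniform_profile R n m).
Proof.
move=> j; split; last exact: unif_sum.
by move=> a; rewrite /uniform_profile invr_ge0 ler0n.
Qed.

Lemma part1 : is_alliance_resistant_Nash f (@uniform_profile R n m).
Proof.
split; first exact: unif_profile.
move=> P tau _ htau.
set u := uniform_profile R (n:=n) (m:=m).
set rho := deviate u tau P.
have hr : profsum rho.
  move=> j; rewrite /rho /deviate; case: ifP => _; first by case: (htau j).
  exact: unif_sum.
have hu : profsum u by move=> j; exact: unif_sum.
have -> : \sum_(i in P) EU f u i = 0.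
  by apply: big1 => i _; rewrite EU_marg // V_const_r.
have E1 : \sum_(i in P) EU f rho i = \sum_(i in P | partner i \in P) EU f rho i.
  rewrite big_mkcondr; apply: eq_bigr => i hi; case: ifP => // hq.
  by rewrite EU_marg // {2}/rho /deviate hq V_const_r.
have E2 : \sum_(i in P | partner i \in P) EU f rho i =
          - \sum_(i in P | partner i \in P) EU f rho i.
  rewrite {1}(reindex_inj partner_inj) /= -sumrN.
  rewrite (eq_bigl (fun j => (j \in P) && (partner j \in P))); last first.
    by move=> j; rewrite partner_invol andbC.
  by apply: eq_bigr => j _; rewrite EU_partner.
rewrite E1; lra.
Qed.

Lemma EU_dev sigma (hs : profsum sigma) j t (ht : \sum_a t a = 1) :
  EU f (deviate sigma (fun _ => t) [set j]) j = V j t (sigma (partner j)).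
Proof.
rewrite EU_marg; last first.
  by move=> k; rewrite /deviate; case: ifP.
by rewrite /deviate in_set1 eqxx in_set1 (negbTE (partner_neq j)).
Qed.

Lemma part2 (sigma : 'I_n -> 'I_m -> R) : is_Nash f sigma ->
  forall (i : 'I_n) (a : 'I_m), sigma i a = (m%:R)^-1.
Proof.
move=> [hprof HN] i.
have hs : profsum sigma by move=> j; case: (hprof j).
set q := partner i.
have H1 : 0 <= V i (sigma i) (sigma q).
  have := HN i (fun _ => (m%:R)^-1) (unif_profile i).
  by rewrite EU_dev ?unif_sum // V_const_l EU_marg.
have H2 : forall b, V i (sigma i) (sigma q) <= V i (sigma i) (fun c => (c == b)%:R).
  move=> b.
  have mb : mixed (fun c : 'I_m => ((c == b)%:R : R)).
    split; first by move=> c; rewrite ler0n.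
    rewrite (eq_bigr (fun c => 1 * (c == b)%:R)); first exact: sum_ind.
    by move=> c _; rewrite mul1r.
  have := HN q _ mb.
  rewrite (EU_dev hs); last by case: mb.
  rewrite // EU_marg // /q partner_invol !V_partner.
  by rewrite lerN2.
have W0 : forall b, \sum_a sigma i a * pay i a b = 0.
  move=> b0; apply: (@psumr_eq0P _ _ predT (fun b => \sum_a sigma i a * pay i a b) _ _ b0 isT).
    by move=> b1 _; rewrite -V_point; apply: le_trans (H2 b1).
  rewrite exchange_big big1 // => a _.
  by rewrite -mulr_sumr pay_rowsum mulr0.
apply: const_unif; first by case: (hprof i).
move: W0; rewrite /pay; case: (odd i) => W0.
  apply: kerBT => b; apply/eqP; rewrite -oppr_eq0 -sumrN; apply/eqP.
  by rewrite (eq_bigr (fun a => sigma i a * - Bmat R f b a)) ?W0 // => a _; rewrite mulrN.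
exact: kerB.
Qed.

End Kernel.

Theorem mainTheorem2 (R : realFieldType) (n m f : nat)
  (hn : (0 < n)%N) (hneven : ~~ odd n) (hm : (2 <= m)%N)
  (hf1 : (1 <= f)%N) (hf2 : (f * 2 <= m)%N) (hcop : coprime f m) :
  is_alliance_resistant_Nash f (@uniform_profile R n m) /\
  (forall sigma : 'I_n -> 'I_m -> R, is_Nash f sigma ->
     forall (i : 'I_n) (a : 'I_m), sigma i a = (m%:R)^-1).
Proof.
have m0 : (0 < m)%N by lia.
split; first exact: (@part1 R m f m0 hf1 hf2 hcop n hneven).
exact: (@part2 R m f m0 hf1 hf2 hcop n hneven).
Qed.
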